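(* Let $A$ be a Witt-perfect ring and let $B$ be a $p$-torsion free $A$-algebra. Then $B$ is Witt-perfect if and only if the Frobenius map $x\mapsto x^p$ on $B/pB$ is surjective.
   Context: Fix a prime $p$. For a ring $A$, $\mathbf W_{p^n}(A)$ denotes the ring of $p$-typical Witt vectors of length $n+1$ (as a set $A^{n+1}$), and $\mathbf F:\mathbf W_{p^n}(A)\to\mathbf W_{p^{n-1}}(A)$ the Witt-Frobenius ring homomorphism. $A$ is Witt-perfect if $\mathbf F:\mathbf W_{p^n}(A)\to\mathbf W_{p^{n-1}}(A)$ is surjective for all $n\ge 2$. A ring is $p$-torsion free if $p$ is a nonzero divisor in it. *)

(* Defs.v *)
From HB Require Import structures.
From mathcomp Require Import all_boot all_order all_algebra.
Set Implicit Arguments. Unset Strict Implicit. Unset Printing Implicit Defensive.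
Import Order.TTheory GRing.Theory Num.Theory.
Local Open Scope ring_scope.

Inductive zterm : Type :=
  | ZVar of nat
  | ZConst of int
  | ZAdd of zterm & zterm
  | ZMul of zterm & zterm
  | ZOpp of zterm.

Fixpoint zeval (R : comPzRingType) (x : nat -> R) (t : zterm) : R :=
  match t with
  | ZVar i => x i
  | ZConst c => c%:~R
  | ZAdd t1 t2 => zeval x t1 + zeval x t2
  | ZMul t1 t2 => zeval x t1 * zeval x t2
  | ZOpp t1 => - zeval x t1
  end.

Definition ghost (R : comPzRingType) (p k : nat) (x : nat -> R) : R :=
  \sum_(i < k.+1) (p%:R) ^+ i * (x i) ^+ (p ^ (k - i))%N.

(* phi = (phi_0, ..., phi_{n-1}) are the integer polynomials defining the
   Witt-Frobenius  F : W_{p^n} -> W_{p^(n-1)}, characterised (uniquely, as Z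
   is p-torsion free and infinite) by the ghost identities
   w_k(F(X)) = w_{k+1}(X) for k < n, checked on all integer inputs. *)
Definition FrobPolys (p n : nat) (phi : nat -> zterm) : Prop :=
  forall (x : nat -> int) (k : nat), (k < n)%N ->
    ghost p k (fun i => zeval x (phi i)) = ghost p k.+1 x.

(* A Witt vector of length n+1 is a map 'I_n.+1 -> A; extend by 0. *)
Definition wext (A : comPzRingType) (n : nat) (a : 'I_n.+1 -> A) : nat -> A :=
  fun j => if (j < n.+1)%N then a (inord j) else 0.

Definition WittFrob_surj (A : comPzRingType) (p n : nat) : Prop :=
  exists phi : nat -> zterm, FrobPolys p n phi /\
    forall y : 'I_n -> A, exists a : 'I_n.+1 -> A,
      forall i : 'I_n, zeval (wext a) (phi i) = y i.

Definition WittPerfect (A : comPzRingType) (p : nat) : Prop :=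
  forall n : nat, (2 <= n)%N -> WittFrob_surj A p n.

Definition p_torsion_free (B : comPzRingType) (p : nat) : Prop :=
  forall b : B, p%:R * b = 0 -> b = 0.

Definition frob_modp_surj (B : comPzRingType) (p : nat) : Prop :=
  forall b : B, exists c d : B, b = c ^+ p + p%:R * d.

(* Main.v *)
From HB Require Import structures.
From mathcomp Require Import all_boot all_order all_algebra.
From mathcomp Require Import ring mpoly zify.
Require Import Defs.
Set Implicit Arguments. Unset Strict Implicit. Unset Printing Implicit Defensive.
Import Order.TTheory GRing.Theory Num.Theory.
Local Open Scope ring_scope.
Lemma ghost_ext (R : comPzRingType) p k (x y : nat -> R) :
  (forall i, (i <= k)%N -> x i = y i) -> ghost p k x = ghost p k y.
Proof.
move=> h; rewrite /ghost; apply: eq_bigr => i _; rewrite h //; exact: (ltn_ord i).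
Qed.

Lemma ghost_morph (R S : comPzRingType) (g : {rmorphism R -> S}) p k (x : nat -> R) :
  g (ghost p k x) = ghost p k (g \o x).
Proof.
rewrite /ghost rmorph_sum; apply: eq_bigr => i _.
by rewrite rmorphM rmorphXn rmorph_nat rmorphXn.
Qed.

Lemma ghostS (R : comPzRingType) p k (x : nat -> R) :
  ghost p k.+1 x = \sum_(i < k.+1) (p%:R) ^+ i * (x i) ^+ (p ^ (k.+1 - i))%N
                   + (p%:R) ^+ k.+1 * x k.+1.
Proof. by rewrite /ghost big_ord_recr /= subnn expn0 expr1. Qed.

Fixpoint zvb (t : zterm) : nat :=
  match t with
  | ZVar i => i.+1
  | ZConst _ => 0%N
  | ZAdd t1 t2 => maxn (zvb t1) (zvb t2)
  | ZMul t1 t2 => maxn (zvb t1) (zvb t2)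
  | ZOpp t1 => zvb t1
  end.

Lemma zeval_ext (R : comPzRingType) (x y : nat -> R) t :
  (forall i, (i < zvb t)%N -> x i = y i) -> zeval x t = zeval y t.
Proof.
elim: t => [i|c|t1 IH1 t2 IH2|t1 IH1 t2 IH2|t1 IH1] /= h.
- by apply: h.
- by [].
- rewrite IH1 ?IH2 // => i hi; apply: h; rewrite leq_max hi ?orbT //.
- rewrite IH1 ?IH2 // => i hi; apply: h; rewrite leq_max hi ?orbT //.
- by rewrite IH1.
Qed.

Lemma zeval_morph (R S : comPzRingType) (g : {rmorphism R -> S}) (x : nat -> R) t :
  g (zeval x t) = zeval (g \o x) t.
Proof.
elim: t => [i|c|t1 IH1 t2 IH2|t1 IH1 t2 IH2|t1 IH1] /=.
- by [].
- by rewrite rmorph_int.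
- by rewrite rmorphD IH1 IH2.
- by rewrite rmorphM IH1 IH2.
- by rewrite rmorphN IH1.
Qed.
Lemma mpolyC_int n (c : int) : c%:MP = c%:~R :> {mpoly int[n]}.
Proof. by rewrite -[c in LHS]intz rmorph_int. Qed.

Lemma mpoly_hom_eq (n : nat) (S : comNzRingType) (g1 g2 : {rmorphism {mpoly int[n]} -> S}) :
  (forall i, g1 'X_i = g2 'X_i) -> forall q, g1 q = g2 q.
Proof.
move=> h q; elim/mpolyind: q => [|c m q _ _ IH]; first by rewrite !rmorph0.
rewrite !rmorphD IH; congr (_ + _).
rewrite -mul_mpolyC !rmorphM mpolyXE_id !rmorph_prod mpolyC_int !rmorph_int.
congr (_ * _); apply: eq_bigr => i _; by rewrite !rmorphXn h.
Qed.

Lemma poly_int_roots (P : {poly int}) : (forall t : int, P.[t] = 0) -> P = 0.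
Proof.
move=> h; apply: (@roots_geq_poly_eq0 _ P [seq i%:Z | i <- iota 0 (size P)]).
- by apply/allP => t _; apply/rootP; apply: h.
- rewrite map_inj_uniq ?iota_uniq //; by move=> a b [].
- by rewrite size_map size_iota.
Qed.
Lemma muniXw n (j : 'I_n) : muni ('X_(widen_ord (leqnSn n) j) : {mpoly int[n.+1]}) = ('X_j)%:P.
Proof.
rewrite /muni mmapX mmap1U /=.
case: splitP => k /= hk.
- congr (('X__)%:P); apply: val_inj => /=; by rewrite -hk.
- move: (ltn_ord j); rewrite hk; case: k {hk} => [[|k] //= _]; by rewrite ltnNge leq_addr.
Qed.
Lemma muniXm n : muni ('X_ord_max : {mpoly int[n.+1]}) = 'X.
Proof.
rewrite /muni mmapX mmap1U /=.
case: splitP => k /= hk //.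
by move: (ltn_ord k); rewrite -hk ltnn.
Qed.

Lemma ord_split n (i : 'I_n.+1) : (exists j : 'I_n, i = widen_ord (leqnSn n) j) \/ i = ord_max.
Proof.
case: (ltnP i n) => h; [left; exists (Ordinal h) | right]; apply: val_inj => //=.
by apply/eqP; rewrite eqn_leq h -ltnS ltn_ord.
Qed.

Definition vext n (v : 'I_n -> int) (t : int) : 'I_n.+1 -> int :=
  fun i => if insub (val i) is Some j then v j else t.

Lemma mpoly_zero n (Q : {mpoly int[n]}) : (forall v : 'I_n -> int, Q.@[v] = 0) -> Q = 0.
Proof.
elim: n Q => [|n IH] Q h.
  have := @mpoly_hom_eq 0 _ idfun (@mpolyC 0 int \o meval (fun _ => 0)).
  move=> /(_ _ Q) /= ->; first by rewrite h.
  by case.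
have key v' t : (map_poly (meval v') (muni Q)).[t] = Q.@[vext v' t].
  have E : forall q, (horner_eval t \o map_poly (meval v') \o @muni n int) q = meval (vext v' t) q.
    apply: mpoly_hom_eq => i; case: (ord_split i) => [[j ->]|->] /=.
    - rewrite muniXw map_polyC /horner_eval /= hornerC /= !mevalXU /vext /= insubT //=.
      move=> hj; congr v'; exact: val_inj.
    - rewrite muniXm map_polyX /horner_eval /= hornerX mevalXU /vext /= insubF //=; exact: ltnn.
  exact: (E Q).
have P0 : muni Q = 0.
  apply/polyP => k; rewrite coef0; apply: IH => v'.
  have := poly_int_roots (fun t => etrans (key v' t) (h _)).
  by move/(congr1 (fun P : {poly int} => P`_k)); rewrite coef_map coef0.
have E : forall q, (horner_eval ('X_ord_max : {mpoly int[n.+1]}) \o map_poly (@mwiden n int) \o @muni n int) q = idfun q.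
  apply: mpoly_hom_eq => i; case: (ord_split i) => [[j ->]|->] /=.
  - rewrite muniXw map_polyC /horner_eval /= hornerC /= mwidenX mnmwiden1; congr 'X__; exact: val_inj.
  - by rewrite muniXm map_polyX /horner_eval /= hornerX.
have := E Q; rewrite /= P0 rmorph0 /horner_eval /= horner0 => <- //.
Qed.

Lemma mmapXU (S : comNzRingType) N (h : 'I_N -> S) (o : 'I_N) : mmap intr h 'X_o = h o.
Proof. by rewrite mmapX mmap1U. Qed.

Lemma frob_transfer (S : comNzRingType) p n phi : FrobPolys p n phi ->
  forall (a : nat -> S) k, (k < n)%N ->
  ghost p k (fun i => zeval a (phi i)) = ghost p k.+1 a.
Proof.
move=> hF a k hk.
pose N := maxn n.+2 (\max_(i < n) zvb (phi i)).
pose Xg := fun j : nat => if insub j is Some o then ('X_o : {mpoly int[N]}) else 0.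
pose Q := ghost p k (fun i => zeval Xg (phi i)) - ghost p k.+1 Xg.
have Q0 : Q = 0.
  apply: mpoly_zero => v; rewrite /Q rmorphB !ghost_morph.
  rewrite -(hF (meval v \o Xg) k hk); apply/eqP; rewrite subr_eq0; apply/eqP.
  by apply: ghost_ext => i _ /=; rewrite zeval_morph.
have hN : (n.+2 <= N)%N by rewrite leq_max leqnn.
have ev_Xg j : (j < N)%N -> mmap intr (fun o : 'I_N => a o) (Xg j) = a j.
  by move=> hj; rewrite /Xg insubT /= mmapXU.
have := congr1 (mmap intr (fun o : 'I_N => a o)) Q0.
rewrite /Q rmorphB rmorph0 !ghost_morph => /eqP; rewrite subr_eq0 => /eqP E.
transitivity (ghost p k (mmap intr (fun o : 'I_N => a o) \o (fun i => zeval Xg (phi i)))).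
  apply: ghost_ext => i hi /=; rewrite zeval_morph; apply: zeval_ext => j hj /=.
  rewrite ev_Xg //; apply: (leq_trans hj); rewrite leq_max; apply/orP; right.
  have hin : (i < n)%N by exact: (leq_ltn_trans hi hk).
  exact: (@leq_bigmax _ (fun o : 'I_n => zvb (phi o)) (Ordinal hin)).
rewrite E; apply: ghost_ext => i hi /=; rewrite ev_Xg //.
apply: (leq_trans _ hN); apply: (leq_ltn_trans hi); by rewrite ltnS ltnW.
Qed.

Definition dv (R : comPzRingType) (d x : R) := exists e, x = d * e.

Section Dv.
Variable R : comPzRingType.
Implicit Types d x y : R.
Lemma dv0 d : dv d 0. Proof. by exists 0; rewrite mulr0. Qed.
Lemma dvD d x y : dv d x -> dv d y -> dv d (x + y).
Proof. by move=> [e ->] [f ->]; exists (e + f); rewrite mulrDr. Qed.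
Lemma dvN d x : dv d x -> dv d (- x).
Proof. by move=> [e ->]; exists (- e); rewrite mulrN. Qed.
Lemma dvB d x y : dv d x -> dv d y -> dv d (x - y).
Proof. by move=> hx hy; apply: dvD => //; apply: dvN. Qed.
Lemma dvMr d x y : dv d x -> dv d (x * y).
Proof. by move=> [e ->]; exists (e * y); rewrite mulrA. Qed.
Lemma dvMl d x y : dv d x -> dv d (y * x).
Proof. by move=> h; rewrite mulrC; apply: dvMr. Qed.
Lemma dv_dd d y : dv d (d * y). Proof. by exists y. Qed.
Lemma dvMM d1 d2 x y : dv d1 x -> dv d2 y -> dv (d1 * d2) (x * y).
Proof. by move=> [e ->] [f ->]; exists (e * f); ring. Qed.
Lemma dvW d c x : dv (d * c) x -> dv d x.
Proof. by move=> [e ->]; exists (c * e); rewrite mulrA. Qed.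
Lemma dv_sum d m (F : 'I_m -> R) : (forall i, dv d (F i)) ->
  dv d (\sum_(i < m) F i).
Proof. move=> h; apply: big_ind => //; [exact: dv0 | exact: dvD]. Qed.
Lemma dv_pow (d x y : R) i : dv d (x - y) -> dv d (x ^+ i - y ^+ i).
Proof. by move=> h; rewrite subrXX; apply: dvMr. Qed.
End Dv.

Section Lift.
Variables (R : comPzRingType) (p : nat).
Local Notation P := (p%:R : R).

Lemma dv_lift (j : nat) (a b : R) : (0 < j)%N -> (0 < p)%N -> dv (P ^+ j) (a - b) ->
  dv (P ^+ j.+1) (a ^+ p - b ^+ p).
Proof.
move=> hj hp hab; rewrite subrXX exprSr; apply: dvMM => //.
have hP : dv P (a - b).
  by move: hab; case: j hj => // j _; rewrite exprS => /dvW.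
have -> : \sum_(i < p) a ^+ (p.-1 - i) * b ^+ i =
   \sum_(i < p) (a ^+ (p.-1 - i) - b ^+ (p.-1 - i)) * b ^+ i + P * b ^+ p.-1.
  have -> : P * b ^+ p.-1 = \sum_(i < p) b ^+ p.-1 by rewrite sumr_const card_ord mulr_natl.
  rewrite -big_split /=.
  apply: eq_bigr => i _; rewrite mulrBl -exprD subnK; first by rewrite subrK.
  by rewrite -ltnS prednK // ltn_ord.
apply: dvD; last exact: dv_dd.
apply: dv_sum => i; apply: dvMr; exact: dv_pow.
Qed.

Lemma dv_liftn (j r : nat) (a b : R) : (0 < j)%N -> (0 < p)%N -> dv (P ^+ j) (a - b) ->
  dv (P ^+ (j + r)) (a ^+ (p ^ r) - b ^+ (p ^ r)).
Proof.
move=> hj hp h; elim: r => [|r IH]; first by rewrite addn0 expn0 !expr1.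
rewrite addnS expnSr !exprM; apply: dv_lift => //; by rewrite addn_gt0 hj.
Qed.

Lemma freshman (x y : R) : prime p -> dv P ((x + y) ^+ p - x ^+ p - y ^+ p).
Proof.
move=> pp; have hp := prime_gt0 pp.
have [q hq] : exists q, p = q.+1 by exists p.-1; rewrite prednK.
rewrite {2 3 4}hq exprDn big_ord_recl big_ord_recr /= subn0 subnn bin0 binn !mulr1n expr0 mul1r mulr1.
have -> : forall u v w : R, u + (v + w) - u - w = v by move=> u v w; ring.
apply: dv_sum => i; have hi := ltn_ord i.
have : (p %| 'C(q.+1, i.+1))%N by rewrite -hq prime_dvd_bin //= hq ltnS.
case/dvdnP => c ->; rewrite mulnC mulrnA; exists ((x ^+ (q.+1 - bump 0 i) * y ^+ bump 0 i) *+ c).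
by rewrite -mulrnA mulnC mulrnA mulr_natl.
Qed.
End Lift.

Lemma fermat_int p (c : int) : prime p -> dv (p%:R : int) (c ^+ p - c).
Proof.
move=> pp; have hp := prime_gt0 pp.
have hnat : forall k : nat, dv (p%:R : int) (k%:Z ^+ p - k%:Z).
  elim=> [|k IH]; first by rewrite expr0n gtn_eqF // subr0; apply: dv0.
  have := freshman (k%:Z) 1 pp; rewrite expr1n => hf.
  have -> : (k.+1)%:Z = k%:Z + 1 by rewrite -addn1 PoszD.
  have -> : (k%:Z + 1) ^+ p - (k%:Z + 1) = ((k%:Z + 1) ^+ p - k%:Z ^+ p - 1) + (k%:Z ^+ p - k%:Z) by ring.
  exact: dvD.
case: c => [k|k]; first exact: hnat.
rewrite NegzE; set a := (k.+1)%:Z.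
have := freshman (- a) a pp; rewrite addNr expr0n gtn_eqF // sub0r => hf.
have -> : (- a) ^+ p - (- a) = - (- ((- a) ^+ p) - a ^+ p) - (a ^+ p - a) by ring.
apply: dvB; [exact: dvN | exact: hnat].
Qed.

Definition msig N p : {rmorphism {mpoly int[N]} -> {mpoly int[N]}} :=
  mmap (@mpolyC N int) (fun i => 'X_i ^+ p).

Lemma frob_lift N p : prime p -> forall Q : {mpoly int[N]}, dv (p%:R) (msig N p Q - Q ^+ p).
Proof.
move=> pp; have hp := prime_gt0 pp.
elim/mpolyind => [|c m Q _ _ IH]; first by rewrite rmorph0 expr0n gtn_eqF // subr0; apply: dv0.
have -> : msig N p (c *: 'X_[m] + Q) - (c *: 'X_[m] + Q) ^+ p =
  (msig N p (c *: 'X_[m]) - (c *: 'X_[m]) ^+ p) + (msig N p Q - Q ^+ p)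
  - ((c *: 'X_[m] + Q) ^+ p - (c *: 'X_[m]) ^+ p - Q ^+ p).
  by rewrite rmorphD; ring.
apply: dvB; last exact: freshman.
apply: dvD => //.
rewrite /msig /= mmapZ mmapX -mul_mpolyC exprMn mpolyXE_id -prodrXl.
rewrite [mmap1 _ _](eq_bigr (fun i : 'I_N => ('X_i ^+ m i) ^+ p)); last by move=> i _; rewrite exprAC.
rewrite -[_ c * _]/(c%:MP * _) -mulrBl; apply: dvMr.
have [e he] := fermat_int c pp.
exists (- e%:MP); rewrite -rmorphXn -rmorphB /= -opprB he rmorphN rmorphM rmorph_nat mulrN //.
Qed.

Section Dwork.
Variables (R : comPzRingType) (p : nat) (sig : {rmorphism R -> R}).
Hypothesis pp : prime p.
Hypothesis hsig : forall Q, dv (p%:R) (sig Q - Q ^+ p).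
Local Notation P := (p%:R : R).

Lemma dwK (x : nat -> R) j :
  dv (P ^+ j.+1) (sig (ghost p j x) - \sum_(i < j.+1) P ^+ i * x i ^+ (p ^ (j.+1 - i))).
Proof.
have hp := prime_gt0 pp.
rewrite ghost_morph /ghost -sumrB; apply: dv_sum => i.
have hi : (i <= j)%N by rewrite -ltnS ltn_ord.
rewrite /= -mulrBr subSn // expnS exprM.
have := @dv_liftn R p 1 (j - i) (sig (x i)) (x i ^+ p) isT hp.
rewrite expr1 => /(_ (hsig _)) h.
rewrite (_ : P ^+ j.+1 = P ^+ i * P ^+ (1 + (j - i))); last by rewrite -exprD add1n addnS subnKC.
by apply: dvMM; [exists 1; rewrite mulr1 | exact: h].
Qed.

Definition DW (m : nat) (u : nat -> R) :=
  forall k, (k < m)%N -> dv (P ^+ k.+1) (u k.+1 - sig (u k)).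

Lemma ghost_DW m (x : nat -> R) : DW m (fun k => ghost p k x).
Proof.
move=> k _; rewrite ghostS.
have -> : forall a b c : R, a + b - c = - (c - a) + b by move=> a b c; ring.
apply: dvD; [apply: dvN; exact: dwK | exact: dv_dd].
Qed.

Lemma DW_add m u v : DW m u -> DW m v -> DW m (fun k => u k + v k).
Proof.
move=> hu hv k hk; rewrite rmorphD.
have -> : u k.+1 + v k.+1 - (sig (u k) + sig (v k)) = (u k.+1 - sig (u k)) + (v k.+1 - sig (v k)) by ring.
by apply: dvD; [apply: hu | apply: hv].
Qed.

Lemma DW_mul m u v : DW m u -> DW m v -> DW m (fun k => u k * v k).
Proof.
move=> hu hv k hk; rewrite rmorphM.
have -> : u k.+1 * v k.+1 - sig (u k) * sig (v k) = (u k.+1 - sig (u k)) * v k.+1 + sig (u k) * (v k.+1 - sig (v k)) by ring.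
by apply: dvD; [apply: dvMr; apply: hu | apply: dvMl; apply: hv].
Qed.

Lemma DW_opp m u : DW m u -> DW m (fun k => - u k).
Proof.
move=> hu k hk; rewrite rmorphN.
have -> : - u k.+1 - - sig (u k) = - (u k.+1 - sig (u k)) by ring.
by apply: dvN; apply: hu.
Qed.

Lemma dwork m u : DW m u -> exists x, forall k, (k <= m)%N -> u k = ghost p k x.
Proof.
move=> hu.
suff : forall j, (j <= m)%N -> exists x, forall k, (k <= j)%N -> u k = ghost p k x.
  by move=> /(_ m (leqnn m)).
elim=> [_|j IH hj].
  exists (fun _ => u 0%N) => k; rewrite leqn0 => /eqP ->.
  by rewrite /ghost big_ord1 expr0 mul1r expn0 expr1.
have [x hx] := IH (ltnW hj).
have [D hD] : dv (P ^+ j.+1) (u j.+1 - \sum_(i < j.+1) P ^+ i * x i ^+ (p ^ (j.+1 - i))).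
  have -> : u j.+1 - \sum_(i < j.+1) P ^+ i * x i ^+ (p ^ (j.+1 - i)) =
    (u j.+1 - sig (u j)) + (sig (ghost p j x) - \sum_(i < j.+1) P ^+ i * x i ^+ (p ^ (j.+1 - i))).
    by rewrite (hx j (leqnn j)); ring.
  by apply: dvD; [apply: hu | apply: dwK].
exists (fun i => if i == j.+1 then D else x i) => k; rewrite leq_eqVlt => /orP [/eqP ->|hk].
  rewrite ghostS eqxx.
  have -> : \sum_(i < j.+1) P ^+ i * (if i == j.+1 :> nat then D else x i) ^+ (p ^ (j.+1 - i)) =
     \sum_(i < j.+1) P ^+ i * x i ^+ (p ^ (j.+1 - i)).
    by apply: eq_bigr => i _; rewrite ifN // neq_ltn ltn_ord.
  by rewrite -hD addrC subrK.
rewrite (hx k hk); apply: ghost_ext => i hi; rewrite ifN //.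
by rewrite neq_ltn (leq_ltn_trans hi hk).
Qed.
End Dwork.

Definition Gh (S : comPzRingType) p m (g : nat -> S) :=
  exists x, forall k, (k <= m)%N -> g k = ghost p k x.

Lemma gh_setup (S : comNzRingType) m (x y : nat -> S) :
  exists N (X Y : nat -> {mpoly int[N]}) (ev : {rmorphism {mpoly int[N]} -> S}),
    forall i, (i <= m)%N -> ev (X i) = x i /\ ev (Y i) = y i.
Proof.
pose N := (m + m).+2.
pose h := fun o : 'I_N => if (o <= m)%N then x o else y (o - m.+1)%N.
exists N, (fun i => 'X_(inord i)), (fun i => 'X_(inord (m.+1 + i))), (mmap intr h).
move=> i hi /=; rewrite !mmapXU /h !inordK.
- rewrite hi addKn ifN //; apply/negP; lia.
- rewrite /N; lia.
- rewrite /N; lia.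
Qed.

Lemma gh_transport (R S : comPzRingType) (ev : {rmorphism R -> S}) p m (u Z : nat -> R) :
  (forall k, (k <= m)%N -> u k = ghost p k Z) -> Gh p m (fun k => ev (u k)).
Proof. by move=> hZ; exists (ev \o Z) => k hk; rewrite hZ // ghost_morph. Qed.

Lemma Gh_ext (S : comPzRingType) p m (g g' : nat -> S) :
  Gh p m g -> (forall k, (k <= m)%N -> g k = g' k) -> Gh p m g'.
Proof. by move=> [x hx] h; exists x => k hk; rewrite -h // hx. Qed.

Lemma gh_of_DW (S : comNzRingType) p m N (ev : {rmorphism {mpoly int[N]} -> S})
  (u : nat -> {mpoly int[N]}) : prime p -> DW p (msig N p) m u -> Gh p m (fun k => ev (u k)).
Proof.
move=> pp hD; have [Z hZ] := dwork pp (@frob_lift N p pp) hD.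
exact: (gh_transport ev hZ).
Qed.

Lemma ev_ghost (R S : comPzRingType) (ev : {rmorphism R -> S}) p m X (x : nat -> S) k :
  (forall i, (i <= m)%N -> ev (X i) = x i) -> (k <= m)%N -> ev (ghost p k X) = ghost p k x.
Proof.
move=> h hk; rewrite ghost_morph; apply: ghost_ext => i hi /=; apply: h; exact: leq_trans hi hk.
Qed.

Lemma ev_ghost2 (R S : comPzRingType) (ev : {rmorphism R -> S}) p m X Y (x y : nat -> S) k :
  (forall i, (i <= m)%N -> ev (X i) = x i /\ ev (Y i) = y i) -> (k <= m)%N ->
  [/\ ev (ghost p k X + ghost p k Y) = ghost p k x + ghost p k y,
      ev (ghost p k X * ghost p k Y) = ghost p k x * ghost p k y &
      ev (- ghost p k X) = - ghost p k x].
Proof.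
move=> h hk.
have hX : ev (ghost p k X) = ghost p k x by apply: (@ev_ghost R S ev p m) => // i /h [].
have hY : ev (ghost p k Y) = ghost p k y by apply: (@ev_ghost R S ev p m) => // i /h [].
by rewrite rmorphD rmorphM rmorphN hX hY.
Qed.

Lemma gh_add (S : comNzRingType) p m (g g' : nat -> S) : prime p ->
  Gh p m g -> Gh p m g' -> Gh p m (fun k => g k + g' k).
Proof.
move=> pp [x hx] [y hy].
have [N [X [Y [ev hev]]]] := gh_setup m x y.
have G := gh_of_DW ev pp (DW_add (ghost_DW (m := m) pp (@frob_lift N p pp) X) (ghost_DW (m := m) pp (@frob_lift N p pp) Y)).
apply: (Gh_ext G) => k hk; rewrite hx // hy //.
by case: (ev_ghost2 p hev hk).
Qed.

Lemma gh_mul (S : comNzRingType) p m (g g' : nat -> S) : prime p ->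
  Gh p m g -> Gh p m g' -> Gh p m (fun k => g k * g' k).
Proof.
move=> pp [x hx] [y hy].
have [N [X [Y [ev hev]]]] := gh_setup m x y.
have G := gh_of_DW ev pp (DW_mul (ghost_DW (m := m) pp (@frob_lift N p pp) X) (ghost_DW (m := m) pp (@frob_lift N p pp) Y)).
apply: (Gh_ext G) => k hk; rewrite hx // hy //.
by case: (ev_ghost2 p hev hk).
Qed.

Lemma gh_opp (S : comNzRingType) p m (g : nat -> S) : prime p ->
  Gh p m g -> Gh p m (fun k => - g k).
Proof.
move=> pp [x hx].
have [N [X [Y [ev hev]]]] := gh_setup m x x.
have G := gh_of_DW ev pp (DW_opp (ghost_DW (m := m) pp (@frob_lift N p pp) X)).
apply: (Gh_ext G) => k hk; rewrite hx //.
by case: (ev_ghost2 p hev hk).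
Qed.

Lemma ghost0 (R : comPzRingType) p (x : nat -> R) : ghost p 0 x = x 0%N.
Proof. by rewrite /ghost big_ord1 expr0 mul1r expn0 expr1. Qed.

Lemma ghost_single (R : comPzRingType) p k j (c : R) : (0 < p)%N ->
  ghost p k (fun i => if i == j then c else 0) =
  if (k < j)%N then 0 else (p%:R) ^+ j * c ^+ (p ^ (k - j)).
Proof.
move=> hp; rewrite /ghost.
have -> : \sum_(i < k.+1) (p%:R : R) ^+ i * (if i == j :> nat then c else 0) ^+ (p ^ (k - i)) =
          \sum_(i < k.+1 | (i : nat) == j) (p%:R : R) ^+ i * c ^+ (p ^ (k - i)).
  rewrite [RHS]big_mkcond /=; apply: eq_bigr => i _.
  case: eqP => _ //; by rewrite expr0n expn_eq0 gtn_eqF // mulr0.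
case: ltnP => hkj.
  rewrite big_pred0 // => i /=; apply/negbTE; rewrite neq_ltn.
  by rewrite (leq_ltn_trans _ hkj) // -ltnS ltn_ord.
by rewrite (big_pred1 (Ordinal (hkj : (j < k.+1)%N))).
Qed.

Section Main.
Variables (S : comNzRingType) (p : nat).
Hypothesis pp : prime p.
Hypothesis tf : p_torsion_free S p.
Local Notation P := (p%:R : S).
Let hp := prime_gt0 pp.

Lemma tf_pow j (d : S) : P ^+ j * d = 0 -> d = 0.
Proof.
elim: j d => [|j IH] d; first by rewrite expr0 mul1r.
by rewrite exprS -mulrA => /tf /IH.
Qed.

Lemma ghost_inj r (x y : nat -> S) : (forall k, (k <= r)%N -> ghost p k x = ghost p k y) ->
  forall i, (i <= r)%N -> x i = y i.
Proof.
elim: r => [|r IH] h i hi.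
  by move: hi; rewrite leqn0 => /eqP ->; have := h 0%N isT; rewrite !ghost0.
have IH' := IH (fun k hk => h k (leq_trans hk (leqnSn r))).
move: hi; rewrite leq_eqVlt => /orP [/eqP ->|]; last by rewrite ltnS; apply: IH'.
have := h r.+1 (leqnn _); rewrite !ghostS.
have -> : \sum_(i < r.+1) P ^+ i * x i ^+ (p ^ (r.+1 - i)) = \sum_(i < r.+1) P ^+ i * y i ^+ (p ^ (r.+1 - i)).
  by apply: eq_bigr => l _; rewrite IH' // -ltnS.
move=> /addrI /eqP; rewrite -subr_eq0 -mulrBr => /eqP /tf_pow /eqP.
by rewrite subr_eq0 => /eqP.
Qed.

Definition Img m (g : nat -> S) := exists h, Gh p m.+1 h /\ forall k, (k <= m)%N -> g k = h k.+1.

Lemma Img_ext m g g' : Img m g -> (forall k, (k <= m)%N -> g k = g' k) -> Img m g'.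
Proof. by move=> [h [H1 H2]] e; exists h; split => // k hk; rewrite -e // H2. Qed.

Lemma Img_add m g g' : Img m g -> Img m g' -> Img m (fun k => g k + g' k).
Proof.
move=> [h [H1 H2]] [h' [H1' H2']]; exists (fun k => h k + h' k); split; first exact: gh_add.
by move=> k hk; rewrite H2 // H2'.
Qed.

Lemma Img_mul m g g' : Img m g -> Img m g' -> Img m (fun k => g k * g' k).
Proof.
move=> [h [H1 H2]] [h' [H1' H2']]; exists (fun k => h k * h' k); split; first exact: gh_mul.
by move=> k hk; rewrite H2 // H2'.
Qed.

Lemma Gh_single m j (c : S) : Gh p m (fun k => if (k < j)%N then 0 else P ^+ j * c ^+ (p ^ (k - j))).
Proof. by exists (fun i => if i == j then c else 0) => k _; rewrite ghost_single. Qed.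

Lemma Gh_teich m (c : S) : Gh p m (fun k => c ^+ (p ^ k)).
Proof.
apply: (Gh_ext (Gh_single m 0 c)) => k _; by rewrite ltn0 expr0 mul1r subn0.
Qed.

Lemma Img_teich m (b : S) : Img m (fun k => (b ^+ p) ^+ (p ^ k)).
Proof.
exists (fun k => b ^+ (p ^ k)); split; first exact: Gh_teich.
by move=> k _; rewrite -exprM expnS.
Qed.

Lemma Img_p m (g : nat -> S) : Gh p m g -> Img m (fun k => P * g k).
Proof.
move=> [x hx]; exists (fun k => ghost p k (fun i => if i is i'.+1 then x i' else 0)); split.
  by exists (fun i => if i is i'.+1 then x i' else 0).
move=> k hk; rewrite hx // /ghost [X in _ = X]big_ord_recl /= expr0n expn_eq0 gtn_eqF // mulr0 add0r.
rewrite big_distrr; apply: eq_bigr => i _ /=; by rewrite /bump /= add1n subSS exprS mulrA.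
Qed.

Lemma Gh_nat m (n : nat) : Gh p m (fun _ => n%:R : S).
Proof.
elim: n => [|n IH].
  by exists (fun _ => 0) => k _; rewrite /ghost big1 // => i _; rewrite expr0n expn_eq0 gtn_eqF // mulr0.
have h1 : Gh p m (fun _ => 1 : S) by apply: (Gh_ext (Gh_teich m 1)) => k _; rewrite expr1n.
apply: (Gh_ext (gh_add pp IH h1)) => k _.
by rewrite -addn1 natrD.
Qed.

Lemma Gh_pmul m (g : nat -> S) : Gh p m g -> Gh p m (fun k => P * g k).
Proof. by move=> h; apply: gh_mul => //; apply: Gh_nat. Qed.

Lemma Gh_sub m (g g' : nat -> S) : Gh p m g -> Gh p m g' -> Gh p m (fun k => g k - g' k).
Proof. by move=> h h'; apply: gh_add => //; apply: gh_opp. Qed.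

Lemma ghost_zero k : ghost p k (fun _ => 0 : S) = 0.
Proof. by rewrite /ghost big1 // => i _; rewrite expr0n expn_eq0 gtn_eqF // mulr0. Qed.


Lemma Vz_coord m j (d : nat -> S) : Gh p m d -> (forall k, (k < j)%N -> d k = 0) -> (j <= m)%N ->
  exists c, d j = P ^+ j * c.
Proof.
move=> [x hx] hz hj.
have x0 : forall i, (i < j)%N -> x i = 0.
  case: j hz hj => // j hz hj i hi.
  have := @ghost_inj j x (fun _ => 0) _ i; rewrite -ltnS; apply => // k hk.
  rewrite ghost_zero -hx; [by apply: hz; rewrite ltnS | exact: leq_trans hk (ltnW hj)].
exists (x j); rewrite hx //; case: j hz hj x0 => [|j] _ _ x0; first by rewrite ghost0 expr0 mul1r.
rewrite ghostS big1 ?add0r // => i _; rewrite x0 ?expr0n ?expn_eq0 ?gtn_eqF ?mulr0 //.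
Qed.

Lemma frob_iter : frob_modp_surj S p -> forall r (c : S), exists b e, c = b ^+ (p ^ r) + P * e.
Proof.
move=> fs; elim=> [|r IH] c; first by exists c, 0; rewrite mulr0 addr0 expn0 expr1.
have [b [e ->]] := IH c; have [b' [e' hb]] := fs b.
have [f hf] : dv P (b ^+ (p ^ r) - (b' ^+ p) ^+ (p ^ r)).
  apply: dv_pow; exists e'; rewrite hb; ring.
exists b', (f + e); rewrite expnS exprM mulrDr addrA -hf; ring.
Qed.

Lemma main_img m : frob_modp_surj S p ->
  (forall j, (0 < j <= m)%N -> Img m (fun k => if (k < j)%N then 0 else P ^+ j)) ->
  forall g, Gh p m g -> Img m g.
Proof.
move=> fs hE g hg.
suff : forall j, (j <= m.+1)%N -> exists i, Img m i /\ Gh p m (fun k => g k - i k) /\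
         (forall k, (k < j)%N -> g k - i k = 0).
  case/(_ m.+1 (leqnn _)) => i [hi [_ hz]]; apply: (Img_ext hi) => k hk.
  by apply/eqP; rewrite eq_sym -subr_eq0; apply/eqP; apply: hz.
elim=> [_|j IH hj].
  exists (fun _ => 0); split; last split => //.
  - exists (fun _ => 0); split; last by [].
    by exists (fun _ => 0) => k _; rewrite ghost_zero.
  - by apply: (Gh_ext hg) => k _; rewrite subr0.
have [i [hi [hd hz]]] := IH (ltnW hj).
have [c hc] := Vz_coord hd hz hj.
have [b [e hbe]] := frob_iter fs j.+1 c.
pose v := fun k => if (k < j)%N then 0 else P ^+ j.
have hv : Img m v.
  case: j {IH hz hc hbe} hj => [|j] hj in v *.
    apply: (Img_ext (Img_teich m 1)) => k _; by rewrite /v expr1n expr1n ltn0 expr0.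
  by apply: hE; rewrite ltnS in hj; rewrite hj.
have hvG : Gh p m v.
  by apply: (Gh_ext (Gh_single m j 1)) => k _; rewrite /v expr1n mulr1.
pose w := fun k => if (k < j)%N then 0 else P ^+ j * e ^+ (p ^ (k - j)).
pose s := fun k => v k * (b ^+ p) ^+ (p ^ k) + P * w k.
have hs : Img m s by apply: Img_add; [apply: Img_mul => //; apply: Img_teich | apply: Img_p; apply: Gh_single].
have hsG : Gh p m s.
  apply: gh_add => //; last by apply: Gh_pmul; apply: Gh_single.
  apply: gh_mul => //; exact: Gh_teich.
exists (fun k => i k + s k); split; first exact: Img_add.
split.
  apply: (Gh_ext (Gh_sub hd hsG)) => k _ /=; clearbody s; ring.
move=> k hk1; case: (ltnP k j) => hk.
  by rewrite opprD addrA hz // /s /v /w hk mul0r mulr0 addr0 subr0.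
have -> : k = j by apply/eqP; rewrite eqn_leq hk andbT.
rewrite opprD addrA hc hbe /s /v /w ltnn subnn expn0 expr1 -exprM -expnS; ring.
Qed.
End Main.

Lemma witt_surj_nz (S : comNzRingType) p n phi : prime p -> p_torsion_free S p ->
  frob_modp_surj S p -> FrobPolys p n phi -> (0 < n)%N ->
  (forall j, (0 < j < n)%N -> exists a : nat -> S, forall i, (i < n)%N -> zeval a (phi i) = (i == j)%:R) ->
  forall y : 'I_n -> S, exists a : 'I_n.+1 -> S, forall i : 'I_n, zeval (wext a) (phi i) = y i.
Proof.
move=> pp tf fs; case: n phi => [//|m] phi hF _ hE y.
have hp := prime_gt0 pp.
have E' : forall j, (0 < j <= m)%N -> @Img S p m (fun k => if (k < j)%N then 0 else (p%:R : S) ^+ j).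
  move=> j /andP [hj0 hjm]; have [a ha] : exists a : nat -> S, forall i, (i < m.+1)%N -> zeval a (phi i) = (i == j)%:R by apply: hE; rewrite hj0 ltnS.
  exists (fun k => ghost p k a); split; first by exists a.
  move=> k hk; rewrite -(frob_transfer hF a (k := k)) ?ltnS //.
  transitivity (ghost p k (fun i => if i == j then (1 : S) else 0)).
    by rewrite ghost_single // expr1n mulr1.
  apply: ghost_ext => i hi; rewrite ha; first by case: eqP.
  by rewrite ltnS (leq_trans hi hk).
pose yx := fun j => if (j < m.+1)%N then y (inord j) else 0.
have [h [[x hx] hh]] := main_img pp tf fs E' (g := fun k => ghost p k yx) (ex_intro _ yx (fun _ _ => erefl)).
exists (fun o : 'I_m.+2 => x o) => i.
have hw : forall j, (j <= m.+1)%N -> wext (fun o : 'I_m.+2 => x o) j = x j.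
  by move=> j hj; rewrite /wext ltnS hj inordK.
have key : forall k, (k <= m)%N ->
    ghost p k (fun i => zeval (wext (fun o : 'I_m.+2 => x o)) (phi i)) = ghost p k yx.
  move=> k hk; rewrite (frob_transfer hF) ?ltnS //.
  rewrite (@ghost_ext _ p k.+1 _ x); last by move=> l hl; apply: hw; rewrite (leq_trans hl).
  by rewrite -hx ?ltnS // -hh.
have := ghost_inj tf key (i := i); rewrite /yx ltn_ord inord_val; apply.
by rewrite -ltnS.
Qed.

Lemma frob_of_wp (S : comNzRingType) p : prime p -> WittPerfect S p -> frob_modp_surj S p.
Proof.
move=> pp hW b; have [phi [hF hs]] := hW 2%N (leqnn 2).
have [a ha] := hs (fun _ => b).
have := frob_transfer hF (wext a) (k := 0) isT.
rewrite ghost0 (ha ord0) ghostS big_ord1 expr0 mul1r subn0 expn1 expr1 => ->.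
by exists (wext a 0%N), (wext a 1%N).
Qed.

Lemma allz (B : comPzRingType) : (1 : B) = 0 -> forall b : B, b = 0.
Proof. by move=> z b; rewrite -[b]mulr1 z mulr0. Qed.

Definition NZ (B : comPzRingType) (nzB : (1:B) != 0) : Type := B.
HB.instance Definition _ (B : comPzRingType) (nzB : (1:B) != 0) := GRing.ComPzRing.on (NZ nzB).
HB.instance Definition _ (B : comPzRingType) (nzB : (1:B) != 0) := GRing.PzSemiRing_isNonZero.Build (NZ nzB) nzB.

Section T.
Variables (B : comPzRingType) (nz : (1:B) != 0).
Lemma zevalNZ (x : nat -> B) t : @zeval B x t = @zeval (NZ nz) x t.
Proof. elim: t => //= [t1 -> t2 ->|t1 -> t2 ->|t1 ->] //. Qed.
Lemma frobNZ p : frob_modp_surj (NZ nz) p -> frob_modp_surj B p.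
Proof. move=> h b; exact: (h b). Qed.
Lemma frobNZ' p : frob_modp_surj B p -> frob_modp_surj (NZ nz) p.
Proof. move=> h b; exact: (h b). Qed.
Lemma tfNZ p : p_torsion_free B p -> p_torsion_free (NZ nz) p.
Proof. move=> h b; exact: (h b). Qed.
Lemma WFNZ p n : WittFrob_surj B p n -> WittFrob_surj (NZ nz) p n.
Proof.
move=> [phi [hF h]]; exists phi; split => // y; have [a ha] := h y.
by exists a => i; rewrite -zevalNZ ha.
Qed.
Lemma WFNZ' p n : WittFrob_surj (NZ nz) p n -> WittFrob_surj B p n.
Proof.
move=> [phi [hF h]]; exists phi; split => // y; have [a ha] := h y.
by exists a => i; rewrite zevalNZ ha.
Qed.
End T.

Theorem mainTheorem3 (p : nat) (A B : comPzRingType) (f : {rmorphism A -> B}) :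
  prime p -> WittPerfect A p -> p_torsion_free B p ->
  (WittPerfect B p <-> frob_modp_surj B p).
Proof.
move=> pp hA tf.
case: (eqVneq (1 : B) 0) => [z|nz].
  have az := allz z; split => [_ b|_ n hn].
    by exists 0, 0; rewrite (az b); symmetry; apply: az.
  have [phi [hF _]] := hA n hn; exists phi; split => // y.
  by exists (fun _ => 0) => i; rewrite (az (zeval _ _)) (az (y i)).
split.
  move=> hW; apply: (@frobNZ B nz p); apply: (frob_of_wp pp) => n hn.
  apply: (@WFNZ B nz p n); exact: hW n hn.
move=> fs n hn; apply: (@WFNZ' B nz p n); have [phi [hF hsA]] := hA n hn; exists phi; split => //.
have W := (@witt_surj_nz (NZ nz) p n phi pp (@tfNZ B nz p tf) (@frobNZ' B nz p fs) hF (ltnW hn)).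
apply: W => j /andP [_ hjn].
have [a ha] := hsA (fun i : 'I_n => ((i : nat) == j)%:R).
exists (f \o wext a) => i hi; rewrite -zevalNZ -zeval_morph.
by rewrite (ha (Ordinal hi)) rmorph_nat.
Qed.
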